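(* Let $R$ be a commutative Noetherian ring and $n$ a non-negative integer. Let $0\to M'\to M\to M''\to 0$ be an exact sequence of $R$-modules. Then $M$ is in dimension $<n$ if and only if both $M'$ and $M''$ are in dimension $<n$.
   Context: For an $R$-module $L$, $\dim\operatorname{Supp}L=\sup\{\dim R/\mathfrak p:\mathfrak p\in\operatorname{Supp}L\}$, the zero module having dimension $-\infty$. An $R$-module $L$ is ''in dimension $<n$'' if there is a finitely generated submodule $N\subseteq L$ with $\dim\operatorname{Supp}(L/N)<n$. *)

(* Defs.v *)
From mathcomp Require Import all_boot all_algebra.
Set Implicit Arguments.
Unset Strict Implicit.
Unset Printing Implicit Defensive.
Import GRing.Theory.
Local Open Scope ring_scope.

Definition is_ideal (R : comPzRingType) (I : R -> Prop) : Prop :=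
  I 0 /\ (forall a b, I a -> I b -> I (a + b)) /\ (forall r a, I a -> I (r * a)).

Definition ideal_fg (R : comPzRingType) (I : R -> Prop) : Prop :=
  exists s : seq R, forall x,
    I x <-> exists c : 'I_(size s) -> R, x = \sum_(i < size s) c i * s`_i.

Definition noetherian (R : comPzRingType) : Prop :=
  forall I : R -> Prop, is_ideal I -> ideal_fg I.

Definition prime_ideal (R : comPzRingType) (P : R -> Prop) : Prop :=
  is_ideal P /\ ~ P 1 /\ (forall a b, P (a * b) -> P a \/ P b).

(* dim R/p >= k : there is a chain of primes p = q_0 < q_1 < ... < q_k. *)
Definition dim_quot_ge (R : comPzRingType) (p : R -> Prop) (k : nat) : Prop :=
  exists q : nat -> R -> Prop,
    (forall x, q 0%N x <-> p x) /\
    (forall i, (i <= k)%N -> prime_ideal (q i)) /\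
    (forall i, (i < k)%N ->
       (forall x, q i x -> q i.+1 x) /\ (exists x, q i.+1 x /\ ~ q i x)).

(* p in Supp (L/N), N a submodule of L:  p prime and (L/N)_p <> 0, i.e.
   some class x + N is not killed by any s outside p. *)
Definition in_supp_quot (R : comPzRingType) (L : lmodType R)
    (N : L -> Prop) (p : R -> Prop) : Prop :=
  prime_ideal p /\ exists x : L, forall s : R, ~ p s -> ~ N (s *: x).

(* dim Supp (L/N) < n  (sup over the support, with sup of empty = -oo). *)
Definition dim_supp_quot_lt (R : comPzRingType) (L : lmodType R)
    (N : L -> Prop) (n : nat) : Prop :=
  forall p : R -> Prop, in_supp_quot N p -> ~ dim_quot_ge p n.

Definition span_seq (R : comPzRingType) (L : lmodType R) (s : seq L) (x : L) : Prop :=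
  exists c : 'I_(size s) -> R, x = \sum_(i < size s) c i *: s`_i.

Definition in_dim_lt (R : comPzRingType) (L : lmodType R) (n : nat) : Prop :=
  exists s : seq L, dim_supp_quot_lt (span_seq s) n.

(* Main.v *)
Require Import Defs.
From mathcomp Require Import all_boot all_algebra.
From Stdlib Require Import Classical.
Import GRing.Theory.
Local Open Scope ring_scope.

Set Implicit Arguments.
Section Aux.
Variable R : comPzRingType.

Fixpoint spanL (L : lmodType R) (s : seq L) (x : L) : Prop :=
  match s with
  | [::] => x = 0
  | a :: s' => exists r y, @spanL L s' y /\ x = r *: a + y
  end.
Arguments spanL {L}.


Fixpoint spanR (s : seq R) (x : R) : Prop :=
  match s with
  | [::] => x = 0
  | a :: s' => exists r y, spanR s' y /\ x = r * a + y
  end.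

Lemma span_seqE (L : lmodType R) (s : seq L) x : span_seq s x <-> spanL s x.
Proof.
elim: s x => [|a s IH] x /=.
  split; first by case=> c ->; rewrite big_ord0.
  by move=> ->; exists (fun _ => 0); rewrite big_ord0.
split.
  case=> c ->; rewrite big_ord_recl /=.
  exists (c ord0), (\sum_(i < size s) c (lift ord0 i) *: s`_i); split => //.
  by apply/IH; exists (fun i => c (lift ord0 i)).
case=> r [y [/IH [c' ->] ->]].
exists (fun i : 'I_(size s).+1 => match unlift ord0 i with Some j => c' j | None => r end).
rewrite big_ord_recl unlift_none; congr (_ + _).
by apply: eq_bigr => i _; rewrite liftK.
Qed.

Lemma idealE (s : seq R) x :
  (exists c : 'I_(size s) -> R, x = \sum_(i < size s) c i * s`_i) <-> spanR s x.
Proof.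
elim: s x => [|a s IH] x /=.
  split; first by case=> c ->; rewrite big_ord0.
  by move=> ->; exists (fun _ => 0); rewrite big_ord0.
split.
  case=> c ->; rewrite big_ord_recl /=.
  exists (c ord0), (\sum_(i < size s) c (lift ord0 i) * s`_i); split => //.
  by apply/IH; exists (fun i => c (lift ord0 i)).
case=> r [y [/IH [c' ->] ->]].
exists (fun i : 'I_(size s).+1 => match unlift ord0 i with Some j => c' j | None => r end).
rewrite big_ord_recl unlift_none; congr (_ + _).
by apply: eq_bigr => i _; rewrite liftK.
Qed.

Lemma spanR0 s : spanR s 0.
Proof. by elim: s => [|a s IH] //=; exists 0, 0; rewrite mul0r add0r. Qed.

Lemma spanR_add s x y : spanR s x -> spanR s y -> spanR s (x + y).
Proof.
elim: s x y => [|a s IH] x y /=; first by move=> -> ->; rewrite addr0.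
case=> r [u [hu ->]] [r' [u' [hu' ->]]].
exists (r + r'), (u + u'); split; first exact: IH.
by rewrite mulrDl -!addrA; congr (_ + _); rewrite addrCA.
Qed.

Lemma spanR_scale s r x : spanR s x -> spanR s (r * x).
Proof.
elim: s x => [|a s IH] x /=; first by move=> ->; rewrite mulr0.
case=> t [u [hu ->]]; exists (r * t), (r * u); split; first exact: IH.
by rewrite mulrDr mulrA.
Qed.

Variable L : lmodType R.

Lemma spanL0 (s : seq L) : spanL s 0.
Proof. by elim: s => [|a s IH] //=; exists 0, 0; rewrite scale0r add0r. Qed.

Lemma spanL_add (s : seq L) x y : spanL s x -> spanL s y -> spanL s (x + y).
Proof.
elim: s x y => [|a s IH] x y /=; first by move=> -> ->; rewrite addr0.
case=> r [u [hu ->]] [r' [u' [hu' ->]]].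
exists (r + r'), (u + u'); split; first exact: IH.
by rewrite scalerDl -!addrA; congr (_ + _); rewrite addrCA.
Qed.

Lemma spanL_scale (s : seq L) r x : spanL s x -> spanL s (r *: x).
Proof.
elim: s x => [|a s IH] x /=; first by move=> ->; rewrite scaler0.
case=> t [u [hu ->]]; exists (r * t), (r *: u); split; first exact: IH.
by rewrite scalerDr scalerA.
Qed.

Lemma spanL_sub (s : seq L) x y : spanL s x -> spanL s y -> spanL s (x - y).
Proof. by move=> hx hy; apply: spanL_add => //; rewrite -scaleN1r; apply: spanL_scale. Qed.

Lemma spanL_cons (a : L) s x : spanL s x -> spanL (a :: s) x.
Proof. by move=> h; exists 0, x; rewrite scale0r add0r. Qed.

Lemma spanL_head (a : L) s : spanL (a :: s) a.
Proof. by exists 1, 0; rewrite scale1r addr0; split => //; apply: spanL0. Qed.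

Lemma spanL_cat (s1 s2 : seq L) x :
  spanL (s1 ++ s2) x <-> exists z1 z2, spanL s1 z1 /\ spanL s2 z2 /\ x = z1 + z2.
Proof.
elim: s1 x => [|a s1 IH] x /=.
  split; first by move=> h; exists 0, x; rewrite add0r.
  by case=> z1 [z2 [-> [h ->]]]; rewrite add0r.
split.
  case=> r [y [/IH [z1 [z2 [h1 [h2 ->]]]] ->]].
  exists (r *: a + z1), z2; split; first by exists r, z1.
  by split => //; rewrite addrA.
case=> z1 [z2 [[r [y [hy ->]]] [h2 ->]]].
exists r, (y + z2); split; last by rewrite addrA.
by apply/IH; exists y, z2.
Qed.

Definition submodP (P : L -> Prop) :=
  P 0 /\ (forall x y, P x -> P y -> P (x + y)) /\ (forall r x, P x -> P (r *: x)).

Lemma submod_span (s : seq L) : submodP (spanL s).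
Proof. split; [exact: spanL0|split; [exact: spanL_add|exact: spanL_scale]]. Qed.

Lemma key (P : L -> Prop) : noetherian R -> submodP P ->
  forall s : seq L, exists s' : seq L, forall x, (P x /\ spanL s x) <-> spanL s' x.
Proof.
move=> noeth [P0 [PD PZ]].
have PB x y : P x -> P y -> P (x - y).
  by move=> hx hy; apply: PD => //; rewrite -scaleN1r; apply: PZ.
elim=> [|a s [s1 IH]].
  by exists [::] => x /=; split; [case|move=> ->].
pose I r := exists y, spanL s y /\ P (r *: a + y).
have idI : is_ideal I.
  split; first by exists 0; rewrite scale0r addr0; split => //; apply: spanL0.
  split.
    move=> u v [y [hy Py]] [y' [hy' Py']]; exists (y + y'); split; first exact: spanL_add.
    have := PD _ _ Py Py'; congr P; rewrite scalerDl -!addrA; congr (_ + _).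
    by rewrite addrCA.
  move=> r u [y [hy Py]]; exists (r *: y); split; first exact: spanL_scale.
  by have := PZ r _ Py; rewrite scalerDr scalerA.
have [q hq] := noeth I idI.
have lift_gens : forall q : seq R, (forall r, spanR q r -> I r) ->
  exists w : seq L, (forall z, spanL w z -> P z /\ spanL (a :: s) z) /\
   (forall r, spanR q r -> exists z y, spanL w z /\ spanL s y /\ z = r *: a + y).
  elim=> [|b q' IHq] hI.
    exists [::]; split; first by move=> z hz; rewrite hz; split => //; apply: spanL0.
    move=> r /= ->; exists 0, 0; split => //; split; first exact: spanL0.
    by rewrite scale0r addr0.
  have [yb [hyb Pb]] : I b.
    by apply: hI; exists 1, 0; rewrite mul1r addr0; split => //; apply: spanR0.
  have hI' : forall r, spanR q' r -> I r.
    by move=> r hr; apply: hI; exists 0, r; rewrite mul0r add0r.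
  have [w [hw1 hw2]] := IHq hI'.
  exists ((b *: a + yb) :: w); split.
    move=> z [t [z' [hz' ->]]]; have [Pz' Sz'] := hw1 _ hz'.
    split; first by apply: PD => //; apply: PZ.
    apply: spanL_add => //; apply: spanL_scale.
    by exists b, yb.
  move=> r [t [r' [hr' ->]]]; have [z [y [hz [hy ez]]]] := hw2 _ hr'; subst z.
  exists (t *: (b *: a + yb) + (r' *: a + y)), (t *: yb + y).
  split; first by exists t, (r' *: a + y).
  split; first by apply: spanL_add => //; apply: spanL_scale.
  rewrite scalerDl scalerDr scalerA -!addrA; congr (_ + _).
  by rewrite addrCA.
have [w [hw1 hw2]] := lift_gens q (fun r hr => proj2 (hq r) (proj2 (idealE q r) hr)).
exists (w ++ s1) => x; split.
  case=> Px [r [y [hy ex]]].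
  have Ir : I r by exists y; rewrite -ex.
  have [z [y' [hz [hy' ez]]]] := hw2 r (proj1 (idealE q r) (proj1 (hq r) Ir)).
  apply/spanL_cat; exists z, (x - z); split => //; split; last by rewrite addrC subrK.
  apply/IH; split; first by apply: PB => //; case: (hw1 _ hz).
  by rewrite ex ez opprD addrACA subrr add0r; apply: spanL_sub.
case/spanL_cat=> z1 [z2 [h1 [/IH [Pz2 Sz2] ->]]].
have [Pz1 Sz1] := hw1 _ h1.
by split; [apply: PD|apply: spanL_add => //; apply: spanL_cons].
Qed.
End Aux.
Arguments spanL {R L}.

Lemma spanL_map (R : comPzRingType) (L1 L2 : lmodType R) (h : {linear L1 -> L2}) s z :
  spanL (map h s) z <-> exists c, spanL s c /\ h c = z.
Proof.
elim: s z => [|a s IH] z /=.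
  by split; [move=> ->; exists 0; rewrite linear0|case=> c [-> <-]; rewrite linear0].
split.
  case=> r [y [/IH [c [hc <-]] ->]].
  by exists (r *: a + c); split; [exists r, c|rewrite linearD linearZ].
case=> c [[r [y [hy ->]]] <-]; exists r, (h y); split; last by rewrite linearD linearZ.
by apply/IH; exists y.
Qed.

Lemma lift_seq (R : comPzRingType) (L1 L2 : lmodType R) (h : L1 -> L2) (t : seq L2) :
  (forall z, spanL t z -> exists y, h y = z) -> exists u, map h u = t.
Proof.
elim: t => [|a t IH] hs; first by exists [::].
have [y hy] := hs a (@spanL_head _ _ a t).
have [u hu] := IH (fun z hz => hs z (@spanL_cons _ _ a _ _ hz)).
by exists (y :: u); rewrite /= hy hu.
Qed.

Unset Implicit Arguments.
Theorem proposition2p12 (R : comPzRingType) (n : nat)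
    (M' M M'' : lmodType R) (f : {linear M' -> M}) (g : {linear M -> M''}) :
  noetherian R ->
  injective f ->
  (forall z : M'', exists y : M, g y = z) ->
  (forall y : M, g y = 0 <-> exists x : M', f x = y) ->
  (in_dim_lt M n <-> in_dim_lt M' n /\ in_dim_lt M'' n).
Proof.
move=> noeth finj gsurj exact_.
split.
  case=> s hs; split.
    have subP : @submodP _ M (fun y : M => exists x, f x = y).
      split; first by exists 0; rewrite linear0.
      split; first by move=> _ _ [x <-] [x' <-]; exists (x + x'); rewrite linearD.
      by move=> r _ [x <-]; exists (r *: x); rewrite linearZ.
    have [s' hs'] := @key _ M _ noeth subP s.
    have [u hu] := @lift_seq _ _ _ f s' (fun z hz => proj1 (proj2 (hs' z) hz)).
    exists u => p [pp [x' hx']] bad.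
    apply: (hs p _ bad); split => //; exists (f x') => t tp.
    move=> /span_seqE hS; apply: (hx' t tp); apply/span_seqE.
    have : spanL s' (t *: f x') by apply/hs'; split => //; exists (t *: x'); rewrite linearZ.
    rewrite -hu => /(spanL_map f) [c [hc]]; rewrite -linearZ => /finj <-; exact: hc.
  exists (map g s) => p [pp [z hz]] bad.
  have [y hy] := gsurj z.
  apply: (hs p _ bad); split => //; exists y => t tp /span_seqE hS.
  apply: (hz t tp); apply/span_seqE/(spanL_map g); exists (t *: y); split => //.
  by rewrite linearZ hy.
case=> [[s' hs'] [s'' hs'']].
have [t ht] := @lift_seq _ _ _ g s'' (fun z _ => gsurj z).
exists (map f s' ++ t) => p [pp [y hy]] bad.
have [ideal_p [p1 primep]] := pp.
case: (classic (forall u, ~ p u -> ~ span_seq s'' (u *: g y))) => H.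
  by apply: (hs'' p _ bad); split => //; exists (g y).
have [u /not_all_ex_not [up /NNPP hu]] : exists u, ~ (~ p u -> ~ span_seq s'' (u *: g y)).
  exact: not_all_ex_not.
move/span_seqE: hu; rewrite -ht => /(spanL_map g) [c [hc gc]].
have [x' fx'] : exists x', f x' = u *: y - c.
  by apply/exact_; rewrite linearB linearZ gc subrr.
apply: (hs' p _ bad); split => //; exists x' => v vp /span_seqE hv.
apply: (hy (v * u)).
  by case/primep.
apply/span_seqE/spanL_cat; exists (f (v *: x')), (v *: c); split.
  by apply/(spanL_map f); exists (v *: x').
split; first exact: spanL_scale.
have -> : f (v *: x') = v *: f x' by rewrite linearZ.
by rewrite fx' scalerBr scalerA addrNK.
Qed.
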